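(* Let $\boldsymbol\alpha,\boldsymbol\beta\in\mathbb R^{\mathcal X}$ be probability vectors with $x_{\max}(\boldsymbol\alpha)=x_{\max}(\boldsymbol\beta)$, and let $r>0$. If $\mathcal Q'(\boldsymbol\alpha,r)\cap\mathcal Q'(\boldsymbol\beta,r)\neq\emptyset$, then $d(\boldsymbol\alpha,\boldsymbol\beta)\le r$.
   Context: $\mathcal X$ finite, $|\mathcal X|\ge2$. For $a\ge0,\zeta\in\mathbb R$: $d_1(a,\zeta)=|\zeta-a|$; $d_2(a,\zeta)=(\zeta-a)^2/\min(a,\zeta)$ if $a,\zeta>0$, else $\infty$; $d(a,\zeta)=\min(d_1,d_2)$; for vectors $d(\boldsymbol\alpha,\boldsymbol\zeta)=\max_{x\in\mathcal X}d(\alpha_x,\zeta_x)$. $x_{\max}(\boldsymbol\alpha)$ is an index of a largest entry of $\boldsymbol\alpha$, ties broken in an arbitrary but consistent way. Given $x_{\max}$, let $\mathcal X'=\mathcal X\setminus\{x_{\max}\}$. $\omega_\downarrow(a,r)=\max(\sqrt{r^2/4+ar}-r/2,\ r)$, $\omega'(a,r)=\omega_\downarrow(a,r)/(|\mathcal X|-1)$. The quadrant is $\mathcal Q'(\boldsymbol\alpha,r)=\{\boldsymbol\zeta'=(\zeta_x)_{x\in\mathcal X'}\in\mathbb R^{\mathcal X'}: 0\le\zeta_x-\alpha_x\le\omega'(\alpha_x,r)\ \forall x\in\mathcal X'\}$, with $x_{\max}=x_{\max}(\boldsymbol\alpha)$. *)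

(* Defs.v *)
From HB Require Import structures.
From mathcomp Require Import all_boot all_order all_algebra.
Set Implicit Arguments. Unset Strict Implicit. Unset Printing Implicit Defensive.
Import Order.TTheory GRing.Theory Num.Theory.
Local Open Scope ring_scope.

Section Defs.
Variables (R : rcfType) (X : finType).

Definition dist1 (a z : R) : R := `|z - a|.

(* d(a,zeta) = min(d_1, d_2), where d_2 = (zeta-a)^2/min(a,zeta) if a,zeta>0
   and d_2 = +infinity otherwise (so then d = d_1). *)
Definition dist (a z : R) : R :=
  if (0 < a) && (0 < z) then Num.min (dist1 a z) ((z - a) ^+ 2 / Num.min a z)
  else dist1 a z.

(* d(alpha,zeta) = max_x d(alpha_x, zeta_x); all terms are >= 0, so
   starting the max at 0 does not change it (X is nonempty). *)
Definition distv (al ze : X -> R) : R := \big[Num.max/0]_(x : X) dist (al x) (ze x).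

Definition prob_vec (al : X -> R) : Prop :=
  (forall x, 0 <= al x) /\ \sum_(x : X) al x = 1.

Definition is_xmax (xmax : (X -> R) -> X) : Prop :=
  forall (al : X -> R) (y : X), al y <= al (xmax al).

Definition omega_down (a r : R) : R :=
  Num.max (Num.sqrt (r ^+ 2 / 4 + a * r) - r / 2) r.

Definition omega' (a r : R) : R := omega_down a r / (#|X|.-1)%:R.

(* zeta' (given as a function on X, only its values on X' = X \ {xm} matter)
   lies in Q'(alpha, r), where xm = x_max(alpha). *)
Definition inQ' (xm : X) (al : X -> R) (r : R) (ze : X -> R) : Prop :=
  forall x, x != xm -> 0 <= ze x - al x <= omega' (al x) r.

End Defs.

(* Main.v *)
Require Import Defs.
From HB Require Import structures.
From mathcomp Require Import all_boot all_order all_algebra.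
From mathcomp Require Import ring lra.
Import Order.TTheory GRing.Theory Num.Theory.
Local Open Scope ring_scope.

Lemma od_ge (R : rcfType) (a r : R) : r <= omega_down a r.
Proof. by rewrite /omega_down le_max lexx orbT. Qed.

Lemma od_mono (R : rcfType) (a b r : R) : 0 <= r -> 0 <= a -> a <= b ->
  omega_down a r <= omega_down b r.
Proof.
move=> r0 a0 ab; rewrite /omega_down ge_max; apply/andP; split; last first.
  by rewrite le_max lexx orbT.
rewrite le_max; apply/orP; left; rewrite lerD2r.
rewrite ler_sqrt; first by rewrite lerD2l ler_wpM2r.
apply: addr_ge0; [apply: divr_ge0; rewrite ?sqr_ge0 // | apply: mulr_ge0 => //].
exact: le_trans ab.
Qed.

Lemma key (R : rcfType) (a b r : R) : 0 <= a -> a <= b -> 0 < r ->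
  b - a <= omega_down a r -> dist a b <= r.
Proof.
move=> a0 ab r0 h.
have d1 : dist a b <= dist1 a b.
  by rewrite /dist; case: ifP => _ //; rewrite ge_min lexx.
case: (lerP (b - a) r) => hd.
  by apply: le_trans d1 _; rewrite /dist1 ger0_norm ?subr_ge0.
move: h; rewrite /omega_down le_max (leNgt _ r) hd orbF => hs.
have s0 : 0 <= Num.sqrt (r ^+ 2 / 4 + a * r) := sqrtr_ge0 _.
have s2 : Num.sqrt (r ^+ 2 / 4 + a * r) ^+ 2 = r ^+ 2 / 4 + a * r.
  by rewrite sqr_sqrtr //; apply: addr_ge0; [apply: divr_ge0; rewrite ?sqr_ge0 |
     apply: mulr_ge0 => //; apply: ltW].
move: s0 s2 hs; set s := Num.sqrt _ => s0 s2 hs.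
have k : (b - a) ^+ 2 + (b - a) * r <= a * r.
  have : 0 <= (s - (b - a + r / 2)) * (s + (b - a + r / 2)).
    apply: mulr_ge0; lra.
  nra.
have apos : 0 < a by nra.
rewrite /dist ifT; last by apply/andP; split; lra.
rewrite ge_min; apply/orP; right.
rewrite min_l // ler_pdivrMr //; nra.
Qed.

Lemma dist_sym (R : rcfType) (a b : R) : dist a b = dist b a.
Proof.
rewrite /dist /dist1 andbC distrC -(sqrrN (b - a)) opprB.
by rewrite (minC a b).
Qed.

Lemma key2 (R : rcfType) (a b r : R) : 0 <= a -> 0 <= b -> 0 < r ->
  `|b - a| <= omega_down (Num.min a b) r -> dist a b <= r.
Proof.
move=> a0 b0 r0; case: (leP a b) => h.
  rewrite ger0_norm ?subr_ge0 //; exact: key.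
rewrite distrC ger0_norm ?subr_ge0 ?(ltW h) // dist_sym.
by move=> H; apply: key => //; apply: ltW.
Qed.

Theorem lemma5 (R : rcfType) (X : finType) (xmax : (X -> R) -> X)
  (hX : (2 <= #|X|)%N) (hxmax : is_xmax xmax)
  (al be : X -> R) (r : R)
  (hal : prob_vec al) (hbe : prob_vec be)
  (hmax : xmax al = xmax be) (hr : 0 < r)
  (hQ : exists ze : X -> R, inQ' (xmax al) al r ze /\ inQ' (xmax be) be r ze) :
  distv al be <= r.
Proof.
move: hQ => [ze [hQa hQb]].
move: hal hbe => [al0 sa] [be0 sb].
set xm := xmax al in hQa.
have hb : forall y, be y <= be xm by move=> y; rewrite /xm hmax; apply: hxmax.
have ha : forall y, al y <= al xm by move=> y; apply: hxmax.
rewrite -hmax -/xm in hQb.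
set N : R := (#|X|.-1)%:R.
have N0 : 0 < N by rewrite /N ltr0n; case: #|X| hX => [|[|n]].
have om' : forall a, omega' X a r = omega_down a r / N by [].
have px : forall x, x != xm ->
    `|be x - al x| <= omega_down (Num.min (al x) (be x)) r / N.
  move=> x hx; have /andP [h1 h2] := hQa x hx; have /andP [h3 h4] := hQb x hx.
  move: h2 h4; rewrite !om' => h2 h4.
  case: (leP (al x) (be x)) => h.
    rewrite ger0_norm ?subr_ge0 //; lra.
  rewrite distrC ger0_norm ?subr_ge0 ?(ltW h) //; lra.
have pm : forall x, x != xm -> Num.min (al x) (be x) <= Num.min (al xm) (be xm).
  move=> x _; rewrite le_min !ge_min ha hb orbT /=.
  done.
rewrite /distv; apply: (big_ind (fun v => v <= r)).
- exact: ltW.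
- by move=> u v hu hv; rewrite ge_max hu hv.
move=> x _; apply: key2 => //.
case: (eqVneq x xm) => [->|hx]; last first.
  apply: le_trans (px x hx) _; rewrite ler_pdivrMr //.
  rewrite -[Y in Y <= _]mulr1 ler_wpM2l ?(le_trans (ltW hr) (od_ge _ _)) //.
  - exact: le_trans (ltW hr) (od_ge _ _ _).
  - by rewrite /N ler1n; case: #|X| hX => [|[|n]].
have e : be xm - al xm = \sum_(x | x != xm) (al x - be x).
  have Ea : al xm + \sum_(x | x != xm) al x = 1 by rewrite -sa [RHS](bigD1 xm).
  have Eb : be xm + \sum_(x | x != xm) be x = 1 by rewrite -sb [RHS](bigD1 xm).
  rewrite sumrB; lra.
rewrite e; apply: le_trans (ler_norm_sum _ _ _) _.
apply: le_trans (_ : \sum_(x | x != xm) (omega_down (Num.min (al xm) (be xm)) r / N) <= _).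
  apply: ler_sum => y hy; rewrite distrC; apply: le_trans (px y hy) _.
  rewrite ler_pdivrMr // divfK ?gt_eqF //; apply: od_mono; [exact: ltW | by rewrite le_min al0 be0 | exact: pm].
rewrite sumr_const.
have -> : #|[pred x | x != xm]| = #|X|.-1 by rewrite -(cardC1 xm); apply: eq_card => y.
by rewrite -mulr_natr divfK ?gt_eqF.
Qed.
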